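(* Let $\omega=(\omega_0,\dots,\omega_{l-1})\in\Psi^l$ be arbitrary. Then for every $x\in[n]$ we have $\mathrm{single}(x,\omega)=\tau(\omega,\{x\})$, and for all nonempty $A_1,A_2\subseteq[n]$ we have $\mathrm{merge}(\tau(\omega,A_1),\tau(\omega,A_2))=\tau(\omega,A_1\cup A_2)$.
   Context: Fix integers $n\ge1$, $l\ge1$, $b\ge1$, and a set $\Psi$ of triples $\psi=(f,g,h)$ of functions with $f:[n]\to\mathbb Z_{\ge0}$, $g:[n]\to[m]$, $h:[m]\to[b]$ for some $m$. Here $[N]:=\{0,\dots,N-1\}$. A state (sketch) is a pair $(B,q)$ with $B:[l]\times[b]\to\mathbb Z$ a table and $q\in\mathbb Z_{\ge0}$. $\mathrm{compress}(B,q)$: while $\sum_{i\in[l],j\in[b]}\lfloor\log_2(B[i,j]+2)\rfloor>33\,b\,l$, set $q\gets q+1$ and $B[i,j]\gets\max(B[i,j]-1,-1)$ for all $i,j$; then return $(B,q)$. $\mathrm{single}(x,\omega)$: let $B[i,j]=-1$ for all $i,j$, then for each $i\in[l]$ with $\omega_i=(f,g,h)$ set $B[i,h(g(x))]=f(x)$; return $\mathrm{compress}(B,0)$. $\mathrm{merge}((B_a,q_a),(B_b,q_b))$: $q\gets\max(q_a,q_b)$, $B[i,j]\gets\max(B_a[i,j]+q_a-q,\;B_b[i,j]+q_b-q)$ for all $i,j$; return $\mathrm{compress}(B,q)$. For nonempty $A\subseteq[n]$: $\tau_0((f,g,h),A)[j]:=\max(\{f(a): a\in A,\ h(g(a))=j\}\cup\{-1\})$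 for $j\in[b]$; $\tau_1(\psi,A,q)[j]:=\max(\tau_0(\psi,A)[j]-q,-1)$; $\tau_2(\omega,A,q)[i,j]:=\tau_1(\omega_i,A,q)[j]$; $q(\omega,A):=\min\{q\in\mathbb Z_{\ge0}: \sum_{i\in[l],j\in[b]}\lfloor\log_2(\tau_2(\omega,A,q)[i,j]+2)\rfloor\le 33\,b\,l\}$; $\tau(\omega,A):=(\tau_2(\omega,A,q(\omega,A)),\,q(\omega,A))$. *)

(* Defs.v *)
From HB Require Import structures.
From mathcomp Require Import all_boot all_order all_algebra.
From mathcomp Require Import zify.
Set Implicit Arguments. Unset Strict Implicit. Unset Printing Implicit Defensive.
Import Order.TTheory GRing.Theory Num.Theory.
Local Open Scope ring_scope.

Record psi (n b : nat) := Psi {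
  psi_m : nat;
  psi_f : 'I_n -> nat;
  psi_g : 'I_n -> 'I_psi_m;
  psi_h : 'I_psi_m -> 'I_b }.

Definition state (l b : nat) := ('M[int]_(l, b) * nat)%type.

(* floor(log2(z + 2)) ; for the relevant entries z >= -1 so z + 2 >= 1. *)
Definition lg2p2 (z : int) : nat := trunc_log 2 (absz (z + 2)).

Definition cost (l b : nat) (B : 'M[int]_(l, b)) : nat :=
  (\sum_(i < l) \sum_(j < b) lg2p2 (B i j))%N.

Definition budget (l b : nat) : nat := (33 * b * l)%N.

Definition decr (l b : nat) (B : 'M[int]_(l, b)) : 'M[int]_(l, b) :=
  \matrix_(i, j) Num.max (B i j - 1) (-1).

(* the while loop of compress, run with fuel *)
Fixpoint compress_loop (l b : nat) (fuel : nat) (B : 'M[int]_(l, b)) (q : nat)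
  : state l b :=
  if (budget l b < cost B)%N then
    match fuel with
    | O => (B, q)
    | S k => compress_loop k (decr B) q.+1
    end
  else (B, q).

(* fuel sufficient for the loop to terminate: after (max_ij |B i j|) + 1
   iterations every entry equals -1 and the cost is 0. *)
Definition compress_fuel (l b : nat) (B : 'M[int]_(l, b)) : nat :=
  (\sum_(i < l) \sum_(j < b) absz (B i j)).+1.

Definition compress (l b : nat) (s : state l b) : state l b :=
  compress_loop (compress_fuel s.1) s.1 s.2.

Definition single_sketch (n l b : nat) (x : 'I_n) (om : 'I_l -> psi n b) : state l b :=
  compress ((\matrix_(i, j)
     if j == psi_h (psi_g (om i) x) then ((psi_f (om i) x)%:Z) else -1), 0%N).

Definition merge_sketch (l b : nat) (sa sb : state l b) : state l b :=
  let q := maxn sa.2 sb.2 in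
  compress ((\matrix_(i, j) Num.max (sa.1 i j + sa.2%:Z - q%:Z)
                                    (sb.1 i j + sb.2%:Z - q%:Z)), q).

Definition tau0 (n b : nat) (p : psi n b) (A : {set 'I_n}) (j : 'I_b) : int :=
  \big[Num.max/(-1)]_(a in A | psi_h (psi_g p a) == j) (psi_f p a)%:Z.

Definition tau1 (n b : nat) (p : psi n b) (A : {set 'I_n}) (q : nat) (j : 'I_b) : int :=
  Num.max (tau0 p A j - q%:Z) (-1).

Definition tau2 (n l b : nat) (om : 'I_l -> psi n b) (A : {set 'I_n}) (q : nat)
  : 'M[int]_(l, b) := \matrix_(i, j) tau1 (om i) A q j.

Lemma tau_q_exists (n l b : nat) (om : 'I_l -> psi n b) (A : {set 'I_n}) :
  exists q : nat, (cost (tau2 om A q) <= budget l b)%N.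
Proof.
exists (\sum_(i < l) \sum_(a < n) psi_f (om i) a).+1%N.
set S := (\sum_(i < l) \sum_(a < n) psi_f (om i) a)%N.
have H : forall i j, tau2 om A S.+1 i j = -1.
  move=> i j; rewrite mxE /tau1.
  have Hle : tau0 (om i) A j <= S%:Z.
    have HfS : forall a, (psi_f (om i) a <= S)%N.
      move=> a; rewrite /S (bigD1 i) //= (bigD1 a) //= -addnA; exact: leq_addr.
    rewrite /tau0; apply: (big_ind (fun z => z <= S%:Z)).
    - by [].
    - by move=> x y Hx Hy; rewrite ge_max Hx Hy.
    - by move=> a _; rewrite lez_nat.
  apply/eqP; rewrite eq_le ge_max le_max !lexx !orbT !andbT.
  move: Hle; rewrite -[S.+1]addn1 PoszD; lia.
have -> : cost (tau2 om A S.+1) = 0%N.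
  rewrite /cost; apply: big1 => i _; apply: big1 => j _.
  by rewrite H /lg2p2.
by [].
Qed.

Definition qmin (n l b : nat) (om : 'I_l -> psi n b) (A : {set 'I_n}) : nat :=
  ex_minn (tau_q_exists om A).

Definition tau (n l b : nat) (om : 'I_l -> psi n b) (A : {set 'I_n}) : state l b :=
  (tau2 om A (qmin om A), qmin om A).

(* Main.v *)
Require Import Defs.
From mathcomp Require Import all_boot all_order all_algebra.
From mathcomp Require Import zify.
Import Order.TTheory GRing.Theory Num.Theory.
Local Open Scope ring_scope.

Section S.
Variables (n l b : nat) (om : 'I_l -> psi n b).

Lemma tau0E (p : psi n b) A j :
  tau0 p A j = (\max_(a in A | psi_h (psi_g p a) == j) (psi_f p a).+1)%N%:Z - 1.
Proof.
rewrite /tau0.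
apply: (big_rec2 (fun x (y : nat) => x = y%:Z - 1)) => // a x y _ ->.
lia.
Qed.

Lemma maxU (p : psi n b) A1 A2 j :
  (\max_(a in A1 :|: A2 | psi_h (psi_g p a) == j) (psi_f p a).+1)%N =
  maxn (\max_(a in A1 | psi_h (psi_g p a) == j) (psi_f p a).+1)%N
       (\max_(a in A2 | psi_h (psi_g p a) == j) (psi_f p a).+1)%N.
Proof.
rewrite big_mkcond [in RHS]big_mkcond [X in maxn _ X]big_mkcond -big_split /=.
apply: eq_bigr => a _; rewrite in_setU.
by case: (a \in A1); case: (a \in A2); case: (_ == j) => //=; rewrite maxnn.
Qed.

Lemma tau0U (p : psi n b) A1 A2 j :
  tau0 p (A1 :|: A2) j = Num.max (tau0 p A1 j) (tau0 p A2 j).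
Proof. rewrite !tau0E maxU; move: (bigop _ _ _) (bigop _ _ _) => x y; lia. Qed.

Lemma tau0_ge (p : psi n b) A j : -1 <= tau0 p A j.
Proof. rewrite tau0E; set m := bigop _ _ _; lia. Qed.

Lemma decr_tau2 A k : decr (tau2 om A k) = tau2 om A k.+1.
Proof. apply/matrixP => i j; rewrite !mxE /tau1; lia. Qed.

Lemma lg2p2_mono (x y : int) : -1 <= x -> x <= y -> (lg2p2 x <= lg2p2 y)%N.
Proof. move=> H1 H2; rewrite /lg2p2; apply: leq_trunc_log; lia. Qed.

Lemma lg2p2_m1 : lg2p2 (-1) = 0%N.
Proof. by []. Qed.

Lemma qminP A : (cost (tau2 om A (qmin om A)) <= budget l b)%N /\
  forall k, (cost (tau2 om A k) <= budget l b)%N -> (qmin om A <= k)%N.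
Proof. rewrite /qmin; case: ex_minnP => m Hm Hmin; split => //. Qed.

Lemma loopE A fuel k : (k <= qmin om A)%N -> (qmin om A - k <= fuel)%N ->
  compress_loop fuel (tau2 om A k) k = tau om A.
Proof.
have [Hq Hmin] := qminP A.
elim: fuel k => [|f IH] k Hk Hf /=.
- have -> : k = qmin om A by lia.
  by rewrite ltnNge Hq.
- case: ifP => Hc.
  + have Hlt : (k < qmin om A)%N.
      rewrite ltn_neqAle Hk andbT; apply/eqP => E; move: Hc; rewrite E ltnNge Hq //.
    rewrite decr_tau2; apply: IH; lia.
  + have -> : k = qmin om A.
      apply/eqP; rewrite eqn_leq Hk Hmin //; rewrite leqNgt Hc //.
    by [].
Qed.

Lemma fuelE A k : (k <= qmin om A)%N ->
  (qmin om A - k <= compress_fuel (tau2 om A k))%N.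
Proof.
move=> Hk.
have [Hq Hmin] := qminP A.
case E: (qmin om A) => [|m]; first by [].
have Hm : (budget l b < cost (tau2 om A m))%N.
  rewrite ltnNge; apply/negP => H; have := Hmin _ H; lia.
case: (boolP [exists i, exists j, m%:Z <= tau0 (om i) A j]) => [|Hno].
- move/existsP=> [i /existsP [j Hij]].
  rewrite /compress_fuel (bigD1 i) //= (bigD1 j) //= mxE /tau1.
  have H : ((m - k)%N <= absz (Num.max (tau0 (om i) A j - k%:Z) (-1))%R)%N by lia.
  lia.
- exfalso; move: Hm.
  have -> : cost (tau2 om A m) = 0%N.
    rewrite /cost; apply: big1 => i _; apply: big1 => j _.
    rewrite mxE /tau1.
    move: Hno; rewrite negb_exists => /forallP /(_ i); rewrite negb_exists
      => /forallP /(_ j) H.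
    have -> : Num.max (tau0 (om i) A j - m%:Z) (-1) = -1 by move: H; lia.
    by [].
  by [].
Qed.

Lemma compressE A k : (k <= qmin om A)%N -> compress (tau2 om A k, k) = tau om A.
Proof. move=> Hk; exact: (@loopE A _ k Hk (@fuelE A k Hk)). Qed.

Lemma cost_mono A1 A2 k : (cost (tau2 om A1 k) <= cost (tau2 om (A1 :|: A2) k))%N.
Proof.
apply: leq_sum => i _; apply: leq_sum => j _; rewrite !mxE /tau1 tau0U.
have := tau0_ge (om i) A1 j; have := tau0_ge (om i) A2 j => H1 H2.
apply: lg2p2_mono; lia.
Qed.

Lemma qmin_mono A1 A2 : (qmin om A1 <= qmin om (A1 :|: A2))%N.
Proof.
have [Hq _] := qminP (A1 :|: A2); have [_ Hmin] := qminP A1.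
apply: Hmin; exact: leq_trans (cost_mono _ _ _) Hq.
Qed.

End S.

Theorem lemma6 (n l b : nat) (Psi_set : psi n b -> Prop)
  (om : 'I_l -> psi n b) (Hom : forall i, Psi_set (om i)) :
  (forall x : 'I_n, single_sketch x om = tau om [set x]) /\
  (forall A1 A2 : {set 'I_n}, A1 != set0 -> A2 != set0 ->
     merge_sketch (tau om A1) (tau om A2) = tau om (A1 :|: A2)).
Proof.
split.
- move=> x; rewrite /single_sketch -(@compressE _ _ _ om [set x] 0%N) //.
  congr (compress (_, _)); apply/matrixP => i j; rewrite !mxE /tau1 tau0E.
  rewrite big_mkcondr big_set1 [j == _]eq_sym.
  case: (_ == j) => /=; lia.
- move=> A1 A2 _ _.
  rewrite /merge_sketch /=.
  have H1 := @qmin_mono _ _ _ om A1 A2; have H2 := @qmin_mono _ _ _ om A2 A1.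
  rewrite setUC in H2.
  rewrite -(@compressE _ _ _ om (A1 :|: A2) (maxn (qmin om A1) (qmin om A2))); last first.
    by rewrite geq_max H1 H2.
  congr (compress (_, _)); apply/matrixP => i j; rewrite !mxE /tau1 tau0U.
  have := @tau0_ge _ _ (om i) A1 j; have := @tau0_ge _ _ (om i) A2 j.
  lia.
Qed.
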